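(* Let $G$ be an abelian group, $w\in G$, and $\alpha:G\to G$ a group automorphism with $\alpha^2=\mathrm{id}$. Define $\beta:G\to G$ by $\beta(u)=\alpha(u)+w$. Let $q_0$ be the cardinality of the subgroup of $G$ generated by $(\alpha+\mathrm{id})(w)$. If $q_0$ is infinite, then every orbit $\{\beta^k(u):k\in\mathbb{Z}\}$ of $\beta$ is infinite. If $q_0$ is finite, then the only possible cardinalities of orbits of $\beta$ are $q_0$ (possible only if $q_0$ is odd) and $2q_0$; orbits of odd cardinality exist if and only if $$( * )\qquad q_0 \text{ is odd and } q_0w\in(\alpha-\mathrm{id})(G)$$ (this holds e.g. if $q_0$ is odd and $(\alpha-\mathrm{id})(G)=\ker(\alpha+\mathrm{id})$). Moreover the numbers of orbits of odd, resp. even, cardinality are $$\nu_{\mathrm{odd}}(\beta)=\begin{cases}\#\ker(\alpha-\mathrm{id})/q_0 & \text{if } ( * ) \text{ holds},\\ 0&\text{otherwise},\end{cases}\qquad \nu_{\mathrm{even}}(\beta)=\begin{cases}\#\bigl(G\setminus\ker(\alpha-\mathrm{id})\bigr)/2q_0 & \text{if } ( * ) \text{ holds},\\ \#G/2q_0&\text{otherwise}.\end{cases}$$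
   Context: $\#$ denotes cardinality; the quotient of an infinite cardinality by a positive integer is understood to be infinite. *)

(* Defs.v *)
From HB Require Import structures.
From mathcomp Require Import all_boot all_order all_algebra.
From mathcomp Require Import boolp classical_sets cardinality.
Set Implicit Arguments. Unset Strict Implicit. Unset Printing Implicit Defensive.
Import Order.TTheory GRing.Theory Num.Theory.
Local Open Scope classical_set_scope.
Local Open Scope ring_scope.
Local Open Scope card_scope.

(* Cardinalities in N u {infinite}: the paper only distinguishes finite
   cardinalities from "infinite". *)
Inductive ecard := Fin of nat | Inf.

Definition card_is {T} (A : set T) (c : ecard) : Prop :=
  match c with
  | Fin n => A #= `I_n
  | Inf => infinite_set A
  end.

Definition ediv (c : ecard) (n : nat) : ecard :=
  match c with
  | Fin m => Fin (m %/ n)%N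
  | Inf => Inf
  end.

Definition cyclic_subgroup (G : zmodType) (x : G) : set G :=
  [set y | exists k : int, y = x *~ k].

Definition beta (G : zmodType) (alpha : G -> G) (w : G) (u : G) : G := alpha u + w.

(* the orbit {beta^k(u) : k in Z} of u under the bijection f:
   v = f^k u with k >= 0, or v = f^(-k) u, i.e. f^k v = u. *)
Definition orbit_of (G : Type) (f : G -> G) (u : G) : set G :=
  [set v | exists k : nat, v = iter k f u \/ iter k f v = u].

Definition orbits (G : Type) (f : G -> G) : set (set G) :=
  [set O | exists u, O = orbit_of f u].

Definition odd_orbits (G : Type) (f : G -> G) : set (set G) :=
  [set O | orbits f O /\ exists n, odd n /\ card_is O (Fin n)].

Definition even_orbits (G : Type) (f : G -> G) : set (set G) :=
  [set O | orbits f O /\ exists n, ~~ odd n /\ card_is O (Fin n)].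

(* Main.v *)
Require Import Defs.
From HB Require Import structures.
From mathcomp Require Import all_boot all_order all_algebra.
From mathcomp Require Import boolp classical_sets cardinality.
From mathcomp Require finmap.
From mathcomp Require Import zify ring lra.
Import Order.TTheory GRing.Theory Num.Theory.
Local Open Scope classical_set_scope.
Local Open Scope card_scope.

Module Helpers.
Import finmap.

Lemma cardFinP (T : choiceType) (A : set T) n :
  A #= `I_n <-> (finite_set A /\ #|` fset_set A| = n).
Proof.
split.
  by move=> h; split; [exists n | exact: card_fset_set].
move=> [fA <-]; have := @card_eq_fsetP _ (fset_set A) #|`fset_set A|.
by rewrite fset_setK // => /introT; apply.
Qed.

Lemma FC (T S : choiceType) (f : T -> S) (A : set T) (m : nat) : (0 < m)%N ->
  (forall x, A x -> [set z | A z /\ f z = f x] #= `I_m) ->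
  forall c, card_is A c -> card_is (f @` A) (ediv c m).
Proof.
move=> m0 fib [N|] /=.
  move=> /cardFinP [fA cA]; apply/cardFinP; split; first exact: finite_image.
  suff <- : (#|` fset_set (f @` A)| * m)%N = N by rewrite mulnK.
  rewrite -cA fset_set_image // !card_fset_sum1 (partition_big_imfset _ f).
  rewrite big_distrl /= [LHS]big_seq [RHS]big_seq; apply: eq_bigr => j /imfsetP [x /= xA ->].
  rewrite mul1n big_fset_condE -card_fset_sum1.
  have xA' : A x by move: xA; rewrite in_fset_set //; move/set_mem.
  idtac.
  have /cardFinP [_ <-] := fib x xA'.
  congr (#|` _|); apply/fsetP => z; rewrite in_fset_set; last first.
    by apply: (sub_finite_set _ fA) => y [].
  rewrite in_fset /= [in RHS]inE /= in_fset_set //.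
  apply/idP/andP => [/set_mem [Az fz]|[/set_mem Az /eqP fz]].
    by split; [apply/mem_set | apply/eqP].
  by apply/mem_set.
move=> infA finB; apply: infA.
apply: (@sub_finite_set _ _ (\bigcup_(y in f @` A) [set z | A z /\ f z = y])).
  by move=> x Ax; exists (f x) => //; exists x.
apply: bigcup_finite => // _ [x Ax <-]; exists m; exact: fib.
Qed.

Lemma card_disjU (T : choiceType) (A B : set T) n m :
  A #= `I_n -> B #= `I_m -> A `&` B = set0 -> (A `|` B) #= `I_(n + m).
Proof.
move=> /cardFinP [fA cA] /cardFinP [fB cB] AB; apply/cardFinP; split.
  by rewrite finite_setU.
rewrite fset_setU // cardfsU -fset_setI // AB fset_set0 cardfs0 subn0.
by rewrite cA cB.
Qed.
End Helpers.

Lemma cardI_uniq T (A : set T) n m : A #= `I_n -> A #= `I_m -> n = m.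
Proof.
move=> h1 h2; apply/card_eq_II; apply: card_eq_trans (h2).
by rewrite card_eq_sym.
Qed.

Lemma card_is_eq T U (A : set T) (B : set U) c :
  A #= B -> card_is B c -> card_is A c.
Proof.
case: c => [n|] /= AB.
  by move=> h; apply: card_eq_trans h.
by rewrite (eq_finite_set AB).
Qed.

Import Helpers.
Local Open Scope ring_scope.

Arguments cardI_uniq {T A n m}.
Arguments card_is_eq {T U A B c}.

Section Main.
Variables (G : zmodType) (w : G) (alpha : G -> G).
Hypothesis aD : forall x y, alpha (x + y) = alpha x + alpha y.
Hypothesis aI : forall x, alpha (alpha x) = x.
Local Notation b := (beta alpha w).
Local Notation t := (alpha w + w).
Local Notation Q := (cyclic_subgroup t).

Lemma a0 : alpha 0 = 0.
Proof. have h := aD 0 0; rewrite addr0 in h; apply: (addrI (alpha 0)); by rewrite addr0 -h. Qed.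
Lemma aN x : alpha (- x) = - alpha x.
Proof. by apply: (addrI (alpha x)); rewrite -aD !subrr a0. Qed.
Lemma aB x y : alpha (x - y) = alpha x - alpha y.
Proof. by rewrite aD aN. Qed.
Lemma aMn x n : alpha (x *+ n) = alpha x *+ n.
Proof. by elim: n => [|n IH]; rewrite ?mulr0n ?a0 // !mulrS aD IH. Qed.
Lemma aMz x k : alpha (x *~ k) = alpha x *~ k.
Proof. by case: k => n; rewrite ?NegzE ?mulrNz -?pmulrn ?aN aMn. Qed.
Lemma at_ : alpha t = t.
Proof. by rewrite aD aI addrC. Qed.

Lemma Q0 : Q 0. Proof. by exists 0; rewrite mulr0z. Qed.
Lemma Qt : Q t. Proof. by exists 1; rewrite mulr1z. Qed.
Lemma QD x y : Q x -> Q y -> Q (x + y).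
Proof. by move=> [k ->] [l ->]; exists (k + l); rewrite mulrzDr. Qed.
Lemma QN x : Q x -> Q (- x).
Proof. by move=> [k ->]; exists (- k); rewrite mulrNz. Qed.
Lemma QB x y : Q x -> Q y -> Q (x - y).
Proof. by move=> ? ?; apply: QD => //; apply: QN. Qed.
Lemma QNE x : Q (- x) -> Q x.
Proof. by move=> /QN; rewrite opprK. Qed.
Lemma aQ y : Q y -> alpha y = y.
Proof. by move=> [k ->]; rewrite aMz at_. Qed.
Lemma ab u : alpha (b u) = u + alpha w.
Proof. by rewrite /beta aD aI. Qed.
Lemma bb u : b (b u) = u + t.
Proof. by rewrite /beta ab addrA. Qed.
Lemma bB x y : b x - b y = alpha (x - y).
Proof. by rewrite /beta aB opprD addrACA subrr addr0. Qed.

Lemma bQ1 x u : Q (x - u) -> Q (b x - b u).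
Proof. by move=> h; rewrite bB (aQ _ h). Qed.
Lemma bQ2 x u : Q (x - b u) -> Q (b x - u).
Proof.
move=> h; have -> : b x - u = alpha (x - b u) + t.
  rewrite aB ab /beta [in RHS]opprD -[in RHS]addrA subrKA.
  by rewrite [- u + w]addrC addrA.
by rewrite (aQ _ h); apply: QD => //; apply: Qt.
Qed.

Definition C x := [set v | Q (v - x)].

Lemma iterP k u : Q (iter k b u - u) \/ Q (iter k b u - b u).
Proof.
elim: k => [|k [IH|IH]] /=; first by left; rewrite subrr; apply: Q0.
  by right; apply: bQ1.
by left; apply: bQ2.
Qed.

Lemma iter2 n x : iter n.*2 b x = x + t *+ n.
Proof.
elim: n => [|n IH]; first by rewrite addr0.
by rewrite doubleS /= IH bb mulrSr [RHS]addrA.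
Qed.

Lemma bD x y : b (x + y) = b x + alpha y.
Proof. by rewrite /beta aD addrAC. Qed.
Lemma binj : injective b.
Proof. by move=> x y /(congr1 b); rewrite !bb => /addIr. Qed.
Lemma QMn n : Q (t *+ n).
Proof. by exists n; rewrite pmulrn. Qed.

Lemma orbitE u : orbit_of b u = C u `|` C (b u).
Proof.
apply/seteqP; split => v; rewrite /C /=.
  move=> [k [->|H]].
    by case: (iterP k u) => h; [left|right].
  case: (iterP k v); rewrite H => h.
    by left; rewrite -opprB; apply: QN.
  by right; rewrite -opprB; apply: QN; apply: bQ2.
move=> [[k hk]|[k hk]].
  case: k hk => n hv.
    exists n.*2; left; rewrite iter2 pmulrn -hv.
    by rewrite addrC subrK.
  have hu : u - v = t *+ n.+1 by rewrite -opprB hv NegzE mulrNz opprK -pmulrn.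
  by exists n.+1.*2; right; rewrite iter2 -hu addrC subrK.
case: k hk => n hv.
  exists n.*2.+1; left => /=; rewrite iter2 bD aMn at_ pmulrn -hv.
  by rewrite addrC subrK.
have hu : b u - v = t *+ n.+1 by rewrite -opprB hv NegzE mulrNz opprK -pmulrn.
exists n.*2.+1; right => /=; apply: binj; rewrite iter2 bb.
by rewrite -[v + t *+ n + t]addrA -mulrSr -hu addrC subrK.
Qed.

Lemma sub3 (x y z v : G) : (x - y) + (y - z) + (z - v) = x - v.
Proof. by rewrite subrKA subrKA. Qed.

Lemma CE x y : Q (x - y) -> C x = C y.
Proof.
move=> h; apply/seteqP; split => v; rewrite /C /= => hv.
  by rewrite -(subrKA x v (- y)); apply: QD.
rewrite -(subrKA y v (- x)); apply: QD => //.
by rewrite -opprB; apply: QN.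
Qed.

Lemma Cdisj x y : ~ Q (x - y) -> C x `&` C y = set0.
Proof.
move=> h; apply/seteqP; split => v //; rewrite /C /= => -[hx hy]; apply: h.
rewrite -(subrKA v x (- y)); apply: QD => //.
by rewrite -opprB; apply: QN.
Qed.

Lemma memC x : C x x.
Proof. by rewrite /C /= subrr; apply: Q0. Qed.

Lemma orbit_class u v : orbit_of b u v -> orbit_of b v = orbit_of b u.
Proof.
rewrite !orbitE => -[h|h].
  by rewrite (CE _ _ h) (CE _ _ (bQ1 _ _ h)).
by rewrite (CE _ _ h) (CE _ _ (bQ2 _ _ h)) setUC.
Qed.

Lemma orbit_self u : orbit_of b u u.
Proof. by rewrite orbitE; left; apply: memC. Qed.

Definition OT u := Q (b u - u).

Lemma OT_inv u v : orbit_of b u v -> OT u -> OT v.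
Proof.
rewrite orbitE /OT => -[h|h] hu.
  rewrite -(sub3 (b v) (b u) u v); apply: QD; [apply: QD => //; exact: bQ1|].
  by rewrite -opprB; apply: QN.
rewrite -(sub3 (b v) u (b u) v); apply: QD; [apply: QD => //; first exact: bQ2|].
  by rewrite -opprB; apply: QN.
by rewrite -opprB; apply: QN.
Qed.

Lemma CQ x : C x #= Q.
Proof.
have -> : C x = (fun y => y + x) @` Q.
  apply/seteqP; split => v; rewrite /C /=.
    by move=> h; exists (v - x) => //; rewrite subrK.
  by move=> [y hy <-]; rewrite addrK.
by apply: inj_card_eq => y z _ _ /addIr.
Qed.

Lemma orbit_OT u : OT u -> orbit_of b u = C u.
Proof. by move=> h; rewrite orbitE (CE _ _ h) setUid. Qed.

Lemma orbit_nOT u q : Q #= `I_q -> ~ OT u -> orbit_of b u #= `I_(q + q).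
Proof.
move=> hQ h; rewrite orbitE; apply: card_disjU.
- exact: card_eq_trans (CQ u) hQ.
- exact: card_eq_trans (CQ (b u)) hQ.
rewrite setIC; apply: Cdisj; exact: h.
Qed.

Lemma orbit_OTc u q : Q #= `I_q -> OT u -> orbit_of b u #= `I_q.
Proof. by move=> hQ h; rewrite orbit_OT //; exact: card_eq_trans (CQ u) hQ. Qed.

Lemma tmod k n : (0 < n)%N -> t *+ n = 0 -> t *~ k = t *+ `|(k %% n)%Z|%N.
Proof.
move=> n0 tn.
rewrite {1}(divz_eq k n) mulrzDr mulrC mulrzA -pmulrn tn mul0rz add0r.
by rewrite pmulrn gez0_abs // modz_ge0 // eqz_nat -lt0n.
Qed.

Lemma tmod_lt k n : (0 < n)%N -> (`|(k %% n)%Z| < n)%N.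
Proof.
move=> n0; rewrite -ltz_nat gez0_abs ?modz_ge0 ?eqz_nat -?lt0n //.
by rewrite ltz_pmod // ltz_nat.
Qed.

Lemma Q_order q : Q #= `I_q ->
  [/\ (0 < q)%N, t *+ q = 0 &
      forall k : int, t *~ k = 0 -> exists k', k = k' * q%:Z].
Proof.
move=> hQ.
have Qle : forall n, (0 < n)%N -> t *+ n = 0 -> (q <= n)%N.
  move=> n n0 tn; rewrite -card_le_II.
  apply: (@card_le_trans _ _ _ Q); first by rewrite card_eq_sym in hQ; case/card_eqPle: hQ.
  apply: (@card_le_trans _ _ _ ((fun i => t *+ i) @` `I_n)); last exact: card_image_le.
  apply: subset_card_le => y [k ->]; exists `|(k %% n)%Z|%N; first exact: (tmod_lt k n n0).
  by rewrite (tmod k n n0 tn).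
have [p [p0 tp pq]] : exists p, [/\ (0 < p)%N, t *+ p = 0 & (p <= q)%N].
  case: (pselect (exists i j, [/\ (i < j)%N, (j <= q)%N & t *+ i = t *+ j])).
    move=> [i [j [ij jq e]]]; exists (j - i)%N; split.
    - by rewrite subn_gt0.
    - apply: (addrI (t *+ i)); rewrite -mulrnDr subnKC ?(ltnW ij) //.
      by rewrite e addr0.
    - exact: leq_trans (leq_subr _ _) jq.
  move=> nP; exfalso.
  have inj : {in `I_q.+1 &, injective (fun i => t *+ i)}.
    move=> i j /set_mem hi /set_mem hj /= e; apply/eqP; rewrite eqn_leq.
    case: (ltngtP i j) => // c; exfalso; apply: nP.
      by exists i, j; split.
    by exists j, i; split.
  have := inj_card_eq inj => hI.
  have : `I_q.+1 #<= `I_q.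
    apply: (@card_le_trans _ _ _ ((fun i => t *+ i) @` `I_q.+1)).
      by rewrite card_eq_sym in hI; case/card_eqPle: hI.
    apply: (@card_le_trans _ _ _ Q); last by case/card_eqPle: hQ.
    by apply: subset_card_le => _ [i _ <-]; exists i; rewrite pmulrn.
  by rewrite card_le_II ltnn.
have qp : p = q by apply/eqP; rewrite eqn_leq pq Qle.
subst p; split => // k tk.
have hm := tmod k q p0 tp; rewrite tk in hm.
have m0 : `|(k %% q)%Z|%N = 0%N.
  apply/eqP; apply: contraT; rewrite -lt0n => h.
  by have := Qle _ h (esym hm); rewrite leqNgt tmod_lt.
exists (k %/ q)%Z; rewrite {1}(divz_eq k q).
have -> : (k %% q)%Z = 0 by apply/eqP; rewrite -absz_eq0 m0.
by rewrite addr0.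
Qed.

Definition phi x := alpha x - x.
Lemma phiD x y : phi (x + y) = phi x + phi y.
Proof. by rewrite /phi aD opprD addrACA. Qed.
Lemma phiN x : phi (- x) = - phi x.
Proof. by rewrite /phi aN opprB opprK addrC. Qed.
Lemma phiMn x n : phi (x *+ n) = phi x *+ n.
Proof. by rewrite /phi aMn mulrnBl. Qed.
Lemma phi_anti x : alpha (phi x) + phi x = 0.
Proof. by rewrite /phi aB aI subrKA subrr. Qed.
Lemma OTshift u0 x : b (u0 + x) - (u0 + x) = (b u0 - u0) + phi x.
Proof. by rewrite bD opprD addrACA. Qed.
Lemma bphi u : b u - u = phi u + w.
Proof. by rewrite /beta /phi addrAC. Qed.
Lemma OT_t u : alpha (b u - u) + (b u - u) = t.
Proof.
rewrite bphi aD addrACA phi_anti add0r.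
by rewrite addrC.
Qed.

Lemma Qq q y : t *+ q = 0 -> Q y -> y *+ q = 0.
Proof.
move=> tq [m ->]; rewrite pmulrn -mulrzA mulrC mulrzA -pmulrn tq mul0rz.
by [].
Qed.

Lemma OT_odd q u : Q #= `I_q -> OT u -> odd q.
Proof.
move=> hQ [m hm]; have [q0 tq qdiv] := Q_order _ hQ.
have e := OT_t u; rewrite hm aMz at_ -mulrzDr in e.
have : t *~ (m + m - 1) = 0 by rewrite mulrzBr e mulr1z subrr.
move=> /qdiv [k' hk]; apply: contraT => oq.
have hq : q = (q./2).*2 by rewrite -[LHS]odd_double_half (negbTE oq).
rewrite hq in hk; lia.
Qed.

Lemma OT_star q u : Q #= `I_q -> OT u ->
  odd q /\ exists g : G, w *+ q = alpha g - g.
Proof.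
move=> hQ hu; split; first exact: OT_odd _ _ hQ hu.
have [q0 tq _] := Q_order _ hQ.
exists (- (u *+ q)).
have hw : w = (b u - u) - phi u by rewrite bphi [phi u + w]addrC addrK.
rewrite {1}hw mulrnBl (Qq _ _ tq hu) sub0r /phi mulrnBl aN aMn opprB.
by rewrite opprK addrC.
Qed.

Lemma star_OT q : Q #= `I_q -> odd q -> (exists g : G, w *+ q = alpha g - g) ->
  exists u0, OT u0.
Proof.
move=> hQ oq [g hg]; set r := q./2.
have hq : q = r.*2.+1 by rewrite -[LHS]odd_double_half oq add1n.
have hg' : phi g = w *+ q by rewrite /phi hg.
exists (- (g + w *+ r)); rewrite /OT bphi phiN phiD phiMn hg'.
have -> : - (w *+ q + phi w *+ r) + w = - (t *+ r).
  rewrite addrC -opprB; congr (- _).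
  rewrite hq mulrSr -addnn mulrnDr /phi mulrnBl mulrnDl.
  rewrite addrAC addrK [w *+ r + w *+ r + _]addrC subrKA addrC.
  by [].
by apply: QN; apply: QMn.
Qed.

Lemma OT_shift_iff q u0 v : Q #= `I_q -> odd q -> OT u0 ->
  (OT v <-> phi (v - u0) = 0).
Proof.
move=> hQ oq h0; have [q0 tq _] := Q_order _ hQ.
have -> : v = u0 + (v - u0) by rewrite addrC subrK.
rewrite /OT OTshift; set x := (u0 + (v - u0) - u0).
have -> : x = v - u0 by rewrite /x addrC addKr.
split; last by move=> ->; rewrite addr0.
move=> h; have : Q (phi (v - u0)).
  by rewrite -(addKr (b u0 - u0) (phi (v - u0))); apply: QD => //; apply: QN.
move=> [k hk]; rewrite hk.
have e := phi_anti (v - u0); rewrite hk aMz at_ -mulrzDr in e.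
set r := q./2.
have hq : q = r.*2.+1 by rewrite -[LHS]odd_double_half oq add1n.
have e2 : t *~ (k * q%:Z) = 0.
  by rewrite mulrC mulrzA -pmulrn tq mul0rz.
have e3 : k * q%:Z = (k + k) * r%:Z + k by rewrite hq; nia.
by rewrite e3 mulrzDr mulrzA e mul0rz add0r in e2.
Qed.

Lemma orbit_nOT2 u q : Q #= `I_q -> ~ OT u -> orbit_of b u #= `I_(2 * q).
Proof. by move=> hQ h; rewrite mul2n -addnn; exact: orbit_nOT. Qed.

Lemma count_orbits (A : set G) m c : (0 < m)%N ->
  (forall u v, A u -> orbit_of b u v -> A v) ->
  (forall u, A u -> orbit_of b u #= `I_m) ->
  card_is A c -> card_is (orbit_of b @` A) (ediv c m).
Proof.
move=> m0 Ainv Acard; apply: FC => // x Ax.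
have -> : [set z | A z /\ orbit_of b z = orbit_of b x] = orbit_of b x.
  apply/seteqP; split => z /=.
    by move=> [_ <-]; apply: orbit_self.
  by move=> h; split; [exact: Ainv h | exact: orbit_class].
exact: Acard.
Qed.

Lemma shift_card (A : set G) u0 : ((fun x => x + u0) @` A) #= A.
Proof. by apply: inj_card_eq => x y _ _ /addIr. Qed.


Lemma main_thm :
  let b := beta alpha w in
  let Q := cyclic_subgroup (alpha w + w) in
  let star := fun q : nat =>
    odd q /\ exists g : G, w *+ q = alpha g - g in
  let ker_m := [set x : G | alpha x - x = 0] in
  (card_is Q Inf -> forall u : G, card_is (orbit_of b u) Inf) /\
  (forall q : nat, card_is Q (Fin q) ->
     (forall u : G,
        (card_is (orbit_of b u) (Fin q) /\ odd q) \/
        card_is (orbit_of b u) (Fin (2 * q)%N)) /\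
     ((exists u : G, exists n : nat, odd n /\ card_is (orbit_of b u) (Fin n))
        <-> star q) /\
     (odd q -> range (fun x : G => alpha x - x) = [set x | alpha x + x = 0] -> star q) /\
     (star q ->
        (forall c, card_is ker_m c -> card_is (odd_orbits b) (ediv c q)) /\
        (forall c, card_is (~` ker_m) c ->
                   card_is (even_orbits b) (ediv c (2 * q)%N))) /\
     (~ star q ->
        card_is (odd_orbits b) (Fin 0) /\
        (forall c, card_is [set: G] c ->
                   card_is (even_orbits b) (ediv c (2 * q)%N)))).
Proof.
move=> b Q star ker_m; split.
  move=> /= hinf u hfin; apply: hinf.
  rewrite -(eq_finite_set (CQ u)).
  apply: sub_finite_set hfin; rewrite orbitE //; exact: subsetUl.
move=> q /= hQ; have [q0 tq qdiv] := Q_order _ hQ.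
have nOTe : forall u n, ~ OT u -> orbit_of b u #= `I_n -> ~~ odd n.
  move=> u n h hn; have := cardI_uniq hn (orbit_nOT2 _ _ hQ h).
  by move=> ->; rewrite mul2n odd_double.
split.
  move=> u; case: (pselect (OT u)) => h.
    by left; split; [exact: orbit_OTc | exact: OT_odd _ _ hQ h].
  by right; exact: orbit_nOT2.
split.
  split.
    move=> [u [n [on hn]]]; case: (pselect (OT u)) => h.
      exact: OT_star _ _ hQ h.
    by have := nOTe u n h hn; rewrite on.
  move=> [oq hg]; have [u0 h0] := star_OT _ hQ oq hg.
  by exists u0, q; split => //; exact: orbit_OTc.
split.
  move=> oq hr; split => //.
  have : [set x | alpha x + x = 0] (w *+ q).
    by rewrite /= aMn // -mulrnDl tq.
  by rewrite -hr => -[g _ hg]; exists g; rewrite hg.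
split.
  move=> [oq hg]; have [u0 h0] := star_OT _ hQ oq hg.
  have OTE : OT = (fun x => x + u0) @` ker_m.
    apply/seteqP; split => v /=.
      move=> /(OT_shift_iff _ _ v hQ oq h0) hv.
      by exists (v - u0); rewrite ?subrK.
    move=> [x hx <-]; apply/(OT_shift_iff _ _ _ hQ oq h0).
    by rewrite addrK.
  have OTcE : ~` OT = (fun x => x + u0) @` ~` ker_m.
    apply/seteqP; split => v /=.
      move=> hv; exists (v - u0); rewrite ?subrK //.
      by move=> hk; apply: hv; rewrite OTE; exists (v - u0); rewrite ?subrK.
    move=> [x hx <-]; rewrite OTE => -[y hy /addIr e]; apply: hx.
    by rewrite -e.
  split.
    move=> c hc.
    have -> : odd_orbits b = orbit_of b @` OT.
      apply/seteqP; split => O.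
        move=> [[u ->] [n [on hn]]]; case: (pselect (OT u)) => h.
          by exists u.
        by have := nOTe u n h hn; rewrite on.
      move=> [u hu <-]; split; first by exists u.
      by exists q; split => //; exact: orbit_OTc.
    apply: count_orbits => //.
    - by move=> u v hu huv; exact: (OT_inv _ _ huv hu).
    - by move=> u hu; exact: orbit_OTc.
    - by rewrite OTE; apply: card_is_eq hc; exact: shift_card.
  move=> c hc.
  have -> : even_orbits b = orbit_of b @` ~` OT.
    apply/seteqP; split => O.
      move=> [[u ->] [n [en hn]]]; exists u => // h.
      have := cardI_uniq hn (orbit_OTc _ _ hQ h).
      by move=> e; rewrite e oq in en.
    move=> [u hu <-]; split; first by exists u.
    exists (2 * q)%N; split; first by rewrite mul2n odd_double.
    exact: orbit_nOT2.
  apply: count_orbits => //.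
  - by rewrite muln_gt0.
  - move=> u v hu huv hv; apply: hu.
    apply: (OT_inv v) => //.
    by rewrite (orbit_class _ _ huv); apply: orbit_self.
  - by move=> u hu; exact: orbit_nOT2.
  - by rewrite OTcE; apply: card_is_eq hc; exact: shift_card.
move=> ns.
have nOT : forall u, ~ OT u.
  by move=> u h; apply: ns; exact: OT_star _ _ hQ h.
split.
  rewrite /= II0 card_eq0; apply/eqP; apply/seteqP; split => // O.
  by move=> [[u ->] [n [on hn]]]; have := nOTe u n (nOT u) hn; rewrite on.
move=> c hc.
have -> : even_orbits b = orbit_of b @` [set: G].
  apply/seteqP; split => O.
    by move=> [[u ->] _]; exists u.
  move=> [u _ <-]; split; first by exists u.
  exists (2 * q)%N; split; first by rewrite mul2n odd_double.
  exact: orbit_nOT2.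
apply: count_orbits => //.
- by rewrite muln_gt0.
- by move=> u hu; exact: orbit_nOT2.
Qed.


End Main.

Theorem theorem3p1 (G : zmodType) (w : G) (alpha : G -> G)
  (alpha_add : forall x y, alpha (x + y) = alpha x + alpha y)
  (alpha_inv : forall x, alpha (alpha x) = x) :
  let b := beta alpha w in
  let Q := cyclic_subgroup (alpha w + w) in
  let star := fun q : nat =>
    odd q /\ exists g : G, w *+ q = alpha g - g in
  let ker_m := [set x : G | alpha x - x = 0] in
  (card_is Q Inf -> forall u : G, card_is (orbit_of b u) Inf) /\
  (forall q : nat, card_is Q (Fin q) ->
     (forall u : G,
        (card_is (orbit_of b u) (Fin q) /\ odd q) \/
        card_is (orbit_of b u) (Fin (2 * q)%N)) /\
     ((exists u : G, exists n : nat, odd n /\ card_is (orbit_of b u) (Fin n))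
        <-> star q) /\
     (odd q -> range (fun x : G => alpha x - x) = [set x | alpha x + x = 0] -> star q) /\
     (star q ->
        (forall c, card_is ker_m c -> card_is (odd_orbits b) (ediv c q)) /\
        (forall c, card_is (~` ker_m) c ->
                   card_is (even_orbits b) (ediv c (2 * q)%N))) /\
     (~ star q ->
        card_is (odd_orbits b) (Fin 0) /\
        (forall c, card_is [set: G] c ->
                   card_is (even_orbits b) (ediv c (2 * q)%N)))).
Proof. exact: (@main_thm G w alpha alpha_add alpha_inv). Qed.
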